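(* Consider an urn containing $N$ balls, $M \ge \frac{N}{2}$ of which are white while the others are black. The balls are drawn from the urn one by one uniformly at random without replacement until the urn is empty. Let $\ell$ be an integer with $8\log N \le \ell \le \frac{M}{432}$. If $M \ge 64$, then the probability that there exists some contiguous subsequence of at least $54\ell$ drawn balls containing $\ell$ or fewer white balls is at most $N^{-6}$.
   Context: $\log$ denotes the binary logarithm. *)

(* Defs.v *)
From HB Require Import structures.
From mathcomp Require Import all_boot all_order all_algebra all_fingroup.
From mathcomp Require Import all_classical all_reals exp.
Set Implicit Arguments. Unset Strict Implicit. Unset Printing Implicit Defensive.
Import Order.TTheory GRing.Theory Num.Theory.
Local Open Scope ring_scope.

Definition log2 {R : realType} (x : R) : R := ln x / ln 2.

(* Balls are labelled by 'I_N; ball b is white iff b < M (so there are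
   exactly M white balls when M <= N).  A complete drawing order is a
   permutation s : {perm 'I_N}, s j being the ball drawn at step j;
   uniform drawing without replacement = uniform permutation. *)

Definition whites_in (N M : nat) (s : {perm 'I_N}) (i k : nat) : nat :=
  #|[set j : 'I_N | (i <= j < i + k)%N && (s j < M)%N]|.

Definition bad_draw (N M l : nat) (s : {perm 'I_N}) : bool :=
  [exists i : 'I_N.+1, exists k : 'I_N.+1,
     [&& (54 * l <= k)%N, (i + k <= N)%N & (whites_in M s i k <= l)%N]].

Definition prob_bad (R : realType) (N M l : nat) : R :=
  #|[set s : {perm 'I_N} | bad_draw M l s]|%:R / #|{perm 'I_N}|%:R.

(* Main.v *)
Require Import Defs.
From HB Require Import structures.
From mathcomp Require Import all_boot all_order all_algebra all_fingroup.
From mathcomp Require Import all_classical all_reals exp.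
From mathcomp Require Import zify.
Import Order.TTheory GRing.Theory Num.Theory.

Section Swap.
Variables N M : nat.
Hypothesis hN : (N <= 2 * M)%N.

Definition sw (x : 'I_N) : 'I_N :=
  if (M <= x)%N then insubd x (x - M) else insubd x (x + M).

Lemma val_sw x : val (sw x) =
  if (M <= x)%N then (x - M)%N else if (x + M < N)%N then (x + M)%N else val x.
Proof.
rewrite /sw; case: ifP => hx; rewrite val_insubd //.
by rewrite (leq_ltn_trans (leq_subr _ _) (ltn_ord x)).
Qed.

Lemma sw_inv : involutive sw.
Proof.
move=> x; apply: val_inj => /=; have hx := ltn_ord x.
rewrite (val_sw (sw x)); have e := val_sw x; rewrite !e.
case: (leqP M x) => h1.
  have -> : (M <= x - M)%N = false by apply/negbTE; rewrite -ltnNge; lia.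
  have -> : (x - M + M < N)%N by lia.
  lia.
case: (ltnP (x + M) N) => h2.
  have -> : (M <= x + M)%N by lia.
  lia.
by rewrite leqNgt h1 /= ltnNge h2.
Qed.

Lemma sw_lt (x : 'I_N) : (M <= x)%N -> (sw x < M)%N.
Proof. move=> h; rewrite val_sw h; have := ltn_ord x; lia. Qed.

Definition tf (C : {set 'I_N}) x := if (x \in C) || (sw x \in C) then sw x else x.

Lemma tf_inv C : involutive (tf C).
Proof.
move=> x; rewrite {2}/tf; case E: ((x \in C) || (sw x \in C)).
  by rewrite /tf sw_inv orbC E.
by rewrite /tf E.
Qed.

Definition tp C : {perm 'I_N} := perm (inv_inj (tf_inv C)).

Definition Aset (S : {set 'I_N}) :=
  [set s : {perm 'I_N} | [forall j in S, M <= s j]%N].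

Definition F (p : {perm 'I_N} * {set 'I_N}) : {perm 'I_N} :=
  (p.1 * tp (p.1 @: p.2))%g.

Lemma F_in (s : {perm 'I_N}) (V : {set 'I_N}) (j : 'I_N) : j \in V -> F (s, V) j = sw (s j).
Proof.
move=> jV; rewrite /F permM permE /tf /= imset_f //.
Qed.

Lemma F_white (S : {set 'I_N}) (s : {perm 'I_N}) (V : {set 'I_N}) (j : 'I_N) : s \in Aset S -> V \subset S -> j \in S ->
  (F (s, V) j < M)%N = (j \in V).
Proof.
rewrite inE => /forall_inP hs hVS jS.
have [jV|jV] := boolP (j \in V).
  by rewrite F_in // sw_lt // hs.
rewrite /F permM permE /tf /= mem_imset; last exact: perm_inj.
rewrite (negbTE jV) /=.
case: imsetP => [[k kV ek]|_].
  have := hs k (fintype.subsetP hVS k kV); rewrite -ek.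
  have := @sw_lt (s j) (hs j jS); lia.
by rewrite ltnNge hs.
Qed.

Lemma F_img (s : {perm 'I_N}) (V : {set 'I_N}) : s @: V = sw @: (F (s, V) @: V).
Proof.
rewrite -imset_comp.
have -> : (sw \o F (s, V)) @: V = (sw \o (sw \o s)) @: V.
  by apply: eq_in_imset => j jV /=; rewrite F_in.
by apply: eq_imset => j /=; rewrite sw_inv.
Qed.

Lemma F_inj (S : {set 'I_N}) : {in finset.setX (Aset S) (powerset S) &, injective F}.
Proof.
move=> [s1 V1] [s2 V2] /finset.setXP[/= h1 hV1] /finset.setXP[/= h2 hV2] E.
rewrite powersetE in hV1; rewrite powersetE in hV2.
have eV : V1 = V2.
  apply/setP => j; have [jS|jS] := boolP (j \in S).
    by rewrite -(F_white _ _ _ _ h1 hV1 jS) -(F_white _ _ _ _ h2 hV2 jS) E.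
  by rewrite (contraNF (fintype.subsetP hV1 j)) ?(contraNF (fintype.subsetP hV2 j)).
subst V2.
have eC : s1 @: V1 = s2 @: V1 by rewrite F_img E -F_img.
move: E; rewrite /F /= eC => /mulIg ->; done.
Qed.

Lemma cardA (S : {set 'I_N}) : (#|Aset S| * 2 ^ #|S| <= #|{perm 'I_N}|)%N.
Proof.
rewrite -card_powerset -cardsX -(card_in_imset (F_inj S)); exact: max_card.
Qed.

End Swap.
Lemma sum3 (T : finType) (A : {set T}) :
  (\sum_(S : {set T}) (if S \subset A then 2 ^ #|S| else 0) = 3 ^ #|A|)%N.
Proof.
have := (@bigA_distr nat 0%N 1%N muln addn T (fun i => if i \in A then 2 else 0)%N (fun _ => 1%N)).
have -> : (\prod_i ((if i \in A then 2 else 0) + 1) = 3 ^ #|A|)%N.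
  by rewrite (bigID (mem A)) /= [X in (_ * X)%N]big1 ?muln1;
    [rewrite (eq_bigr (fun _ => 3%N)) ?prod_nat_const // => i ->
    | move=> i /negbTE ->].
move=> ->; apply: eq_bigr => S _.
rewrite (bigID (mem S)) /= [X in (_ * X)%N]big1 ?muln1; last by move=> i /negbTE ->.
case: ifP => hS.
  rewrite (eq_bigr (fun _ => 2%N)) ?prod_nat_const // => i iS.
  by rewrite iS (fintype.subsetP hS i iS).
move/negbT: hS => /fintype.subsetPn [i iS iA].
by rewrite (bigD1 i) //= iS (negbTE iA).
Qed.

Lemma count_W N M (hN : (N <= 2 * M)%N) (W : {set 'I_N}) (m : nat) :
  (#|[set s : {perm 'I_N} | m <= #|[set j in W | M <= s j]| ]| * 3 ^ m
     <= 2 ^ #|W| * #|{perm 'I_N}|)%N.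
Proof.
set T := fun s : {perm 'I_N} => [set j in W | M <= s j]%N.
apply: (@leq_trans (\sum_(s : {perm 'I_N}) 3 ^ #|T s|)).
  rewrite -sum_nat_const big_mkcond /=; apply: leq_sum => s _.
  case: ifP => //; rewrite inE => hs; exact: leq_pexp2l.
have eqT : forall s (S : {set 'I_N}), (S \subset T s) = (S \subset W) && (s \in Aset N M S).
  move=> s S; apply/idP/andP.
    move=> /fintype.subsetP hS; split.
      by apply/fintype.subsetP => j /hS; rewrite inE => /andP[].
    by rewrite inE; apply/forall_inP => j /hS; rewrite inE => /andP[].
  move=> [/fintype.subsetP hW]; rewrite inE => /forall_inP hA.
  by apply/fintype.subsetP => j jS; rewrite inE hW // hA.
rewrite (eq_bigr (fun s => \sum_(S : {set 'I_N})
   (if S \subset W then (if s \in Aset N M S then 2 ^ #|S| else 0) else 0)))%N; last first.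
  move=> s _; rewrite -sum3; apply: eq_bigr => S _; rewrite eqT.
  by case: (S \subset W); case: (s \in Aset N M S).
rewrite exchange_big /=.
apply: (@leq_trans (\sum_(S : {set 'I_N}) (if S \subset W then #|{perm 'I_N}| else 0))).
  apply: leq_sum => S _; case: ifP => _; last by rewrite big1.
  rewrite -big_mkcond /= sum_nat_const; exact: cardA.
rewrite -big_mkcond /= sum_nat_const -card_powerset.
by rewrite leq_mul2r; apply/orP; right; apply/eq_leq/eq_card => S; rewrite inE.
Qed.

Lemma bad_count N M l (hN : (N <= 2 * M)%N) (h0 : (0 < N)%N) :
  (#|[set s : {perm 'I_N} | bad_draw M l s]| * 3 ^ (54 * l - l)
    <= N.+1 * (2 ^ (54 * l) * #|{perm 'I_N}|))%N.
Proof.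
set L := (54 * l)%N.
pose j0 : 'I_N := Ordinal h0.
pose g (i : 'I_N.+1) (t : 'I_L) : 'I_N := insubd j0 (i + t)%N.
pose W i := [set g i t | t : 'I_L].
pose Bad i := [set s : {perm 'I_N} | L - l <= #|[set j in W i | M <= s j]| ]%N.
have hB : forall s, bad_draw M l s -> exists i, s \in Bad i.
  move=> s /existsP [i /existsP [k /and3P [hk hik hw]]].
  exists i; rewrite inE.
  have hg : forall t : 'I_L, val (g i t) = (i + t)%N.
    move=> t; rewrite val_insubd; have := ltn_ord t; case: ifP => //.
    move=> /negbT; rewrite -leqNgt; rewrite /L in hk |- *; lia.
  have cW : #|W i| = L.
    rewrite card_imset ?card_ord // => t1 t2 /(congr1 val); rewrite !hg.
    by move=> /eqP; rewrite eqn_add2l => /eqP /val_inj.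
  set P := [set j : 'I_N | M <= s j]%N.
  have e1 : [set j in W i | M <= s j]%N = W i :&: P by apply/setP => j; rewrite !inE.
  have hwh : (#|W i :\: P| <= l)%N.
    apply: leq_trans hw; apply: subset_leq_card; apply/fintype.subsetP => j.
    rewrite !inE => /andP [hj /imsetP [t _ ej]]; subst j; rewrite -ltnNge in hj.
    rewrite hj andbT hg; have := ltn_ord t; rewrite /L in hk; lia.
  have := cardsID P (W i); rewrite e1 cW; lia.
have hcard : (#|[set s : {perm 'I_N} | bad_draw M l s]| <=
    \sum_(i : 'I_N.+1) #|Bad i|)%N.
  apply: (@leq_trans (\sum_(s : {perm 'I_N}) \sum_(i : 'I_N.+1) (s \in Bad i))).
    rewrite -sum1_card big_mkcond /=; apply: leq_sum => s _; rewrite inE.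
    case: ifP => // /hB [i hi]; rewrite (bigD1 i) //= hi; exact: leq_addr.
  rewrite exchange_big /=; apply: leq_sum => i _.
  rewrite -sum1_card [X in (_ <= X)%N]big_mkcond /=; apply/eq_leq; apply: eq_bigr => s _.
  by case: (s \in Bad i).
apply: (leq_trans (leq_mul hcard (leqnn _))).
rewrite big_distrl /=.
have -> : (N.+1 * (2 ^ L * #|{perm 'I_N}|) = \sum_(i : 'I_N.+1) (2 ^ L * #|{perm 'I_N}|))%N.
  by rewrite sum_nat_const card_ord.
apply: leq_sum => i _.
apply: (leq_trans (@count_W N M hN (W i) (L - l))).
idtac.
rewrite leq_mul2r; apply/orP; right; apply: leq_pexp2l => //.
by apply: leq_trans (leq_imset_card _ _) _; rewrite card_ord.
Qed.

Lemma pow_ineq l : (0 < l)%N -> (2 ^ (55 * l) <= 3 ^ (53 * l))%N.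
Proof.
move=> hl.
have h1 : (2 ^ (55 * l) <= 2 ^ (56 * l))%N.
  apply: leq_pexp2l; [exact: isT | lia].
have h2 : (3 ^ (42 * l) <= 3 ^ (53 * l))%N.
  apply: leq_pexp2l; [exact: isT | lia].
have e1 : (2 ^ (56 * l) = (2 ^ 8) ^ (7 * l))%N.
  by rewrite -expnM mulnA.
have e2 : (3 ^ (42 * l) = (3 ^ 6) ^ (7 * l))%N.
  by rewrite -expnM mulnA.
have h7 : (0 < 7 * l)%N by lia.
have h3 : ((2 ^ 8) ^ (7 * l) <= (3 ^ 6) ^ (7 * l))%N.
  rewrite (leq_exp2r _ _ h7); exact: isT.
apply: (leq_trans h1); rewrite e1; apply: (leq_trans h3); rewrite -e2; exact: h2.
Qed.

Local Open Scope ring_scope.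

Theorem lemma3p2 (R : realType) (N M l : nat) :
  (M <= N)%N ->
  (N%:R / 2 <= (M%:R : R)) ->
  8 * log2 (N%:R : R) <= l%:R ->
  (l%:R : R) <= M%:R / 432 ->
  (64 <= M)%N ->
  prob_bad R N M l <= (N%:R : R) ^- 6.
Proof.
move=> hMN hN2 hlog _ h64.
have hN : (N <= 2 * M)%N.
  by move: hN2; rewrite ler_pdivrMr // -natrM ler_nat mulnC.
have h0 : (0 < N)%N by lia.
have hNR : (0 : R) < N%:R by rewrite ltr0n.
have h8 : (N ^ 8 <= 2 ^ l)%N.
  have ln2 : (0 : R) < ln 2 by apply: ln_gt0; rewrite ltr1n.
  move: hlog; rewrite /log2 mulrA ler_pdivrMr // => h.
  rewrite -(@ler_nat R) !natrX -ler_ln ?posrE ?exprn_gt0 ?ltr0n //.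
  have h2 : (0 : R) < 2%:R by rewrite ltr0n.
  rewrite (lnXn _ hNR) (lnXn _ h2) -(mulr_natl (ln (N%:R : R)) 8).
  rewrite -(mulr_natl (ln (2%:R : R)) l).
  exact: h.
have hl : (0 < l)%N.
  case: l h8 {hlog} => // h8; exfalso; move: h8; rewrite expn0.
  have : (64 <= N ^ 8)%N.
    apply: (leq_trans h64); apply: (leq_trans hMN).
    by rewrite -{1}(expn1 N) leq_pexp2l.
  lia.
have key := @bad_count N M l hN h0.
have hP : (0 < #|{perm 'I_N}|)%N by apply/card_gt0P; exists 1%g.
have nat_goal : (#|[set s : {perm 'I_N} | bad_draw M l s]| * N ^ 6 <= #|{perm 'I_N}|)%N.
  rewrite -(@leq_pmul2r (3 ^ (53 * l))) ?expn_gt0 //.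
  rewrite mulnAC (_ : 53 * l = 54 * l - l)%N; last by lia.
  apply: (leq_trans (leq_mul key (leqnn _))).
  rewrite (_ : 54 * l - l = 53 * l)%N; last by lia.
  apply: (@leq_trans (2 ^ (55 * l) * #|{perm 'I_N}|)); last first.
    by rewrite mulnC leq_mul2l pow_ineq ?orbT.
  have A1 : (N.+1 * N ^ 6 <= 2 ^ l)%N.
    apply: leq_trans h8.
    have hN2' : (N.+1 <= N * N)%N by nia.
    rewrite (_ : 8 = 6 + 2)%N // expnD mulnC leq_mul2l.
    by rewrite -mulnn hN2' orbT.
  have -> : (2 ^ (55 * l) = 2 ^ l * 2 ^ (54 * l))%N.
    by rewrite -expnD (_ : (l + 54 * l = 55 * l)%N) //; lia.
  apply: (@leq_trans (N.+1 * N ^ 6 * 2 ^ (54 * l) * #|{perm 'I_N}|)%N).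
    apply/eq_leq; lia.
  by rewrite !leq_mul2r A1 !orbT.
rewrite /prob_bad ler_pdivrMr ?ltr0n // mulrC ler_pdivlMr; last exact: exprn_gt0.
rewrite -natrX -natrM ler_nat.
exact: nat_goal.
Qed.
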